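(* Let $d\ge 1$, $e=2^d$, and let $a=a_1\cdots a_{d+e}\in\{0,1\}^{d+e}$ satisfy $\overline{a_1\cdots a_d}=a_{e+1}\cdots a_{e+d}$ (bitwise complement). Let $k$ be the number of indices $z\in\{d,\dots,e\}$ with $a_z=0$. Write $\lambda_d$ as the concatenation of the $2^e$ blocks $M_dw_0,\dots,M_dw_{2^e-1}$, each of length $e$. Then the number of pairs $(n,z)$ with $n$ even, $0\le n\le 2^e-2$, $d\le z\le e$, such that $a$ occurs in $\lambda_d$ starting at position $e-z+1$ of the block $M_dw_n$ (so that $a_1\cdots a_z$ is the suffix of length $z$ of $M_dw_n$ and $a_{z+1}\cdots a_{d+e}$ is the prefix of length $d+e-z$ of $M_dw_{n+1}$) is exactly $k$.
   Context: Over $\mathbb{F}_2$, $M_0=(1)$ and $M_{d+1}=\begin{pmatrix} M_d & M_d\\ 0 & M_d\end{pmatrix}$, so $M_d$ is $e\times e$ with $e=2^d$. $w_0,\dots,w_{2^e-1}$ are all vectors of $\mathbb{F}_2^e$ in increasing lexicographic order ($w_n$ is the $e$-bit binary representation of $n$, most significant bit first). Binary words and vectors are identified. $\lambda_d=(M_dw_0)(M_dw_1)\cdots(M_dw_{2^e-1})$. For a binary word $u$, $\overline{u}$ denotes its bitwise complement. *)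

(* Defs.v *)
From HB Require Import structures.
From mathcomp Require Import all_boot all_order all_algebra.
Set Implicit Arguments. Unset Strict Implicit. Unset Printing Implicit Defensive.
Import GRing.Theory.

(* Entries of M_d, following the recursive block definition
   M_0 = (1), M_{d+1} = [[M_d, M_d], [0, M_d]]  (0-based indices). *)
Fixpoint Mentry (d i j : nat) : bool :=
  match d with
  | 0 => (i == 0%N) && (j == 0%N)
  | d'.+1 =>
      let h := (2 ^ d')%N in
      if i < h then (if j < h then Mentry d' i j else Mentry d' i (j - h))
      else (if j < h then false else Mentry d' (i - h) (j - h))
  end.

Definition Mmat (d : nat) : 'M['F_2]_(2 ^ d) :=
  \matrix_(i < 2 ^ d, j < 2 ^ d) (Mentry d i j)%:R%R.

(* w_n : the e-bit binary representation of n, most significant bit first,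
   as a column vector (entry i, 0-based, is bit e-1-i of n). *)
Definition wvec (e n : nat) : 'cV['F_2]_e :=
  \col_(i < e) (odd (n %/ 2 ^ (e - i.+1)))%:R%R.

Definition block (d n : nat) : seq 'F_2 :=
  let v := (Mmat d *m wvec (2 ^ d) n)%R in
  [seq v i ord0 | i <- enum 'I_(2 ^ d)].

Definition lambda (d : nat) : seq 'F_2 :=
  flatten [seq block d n | n <- iota 0 (2 ^ (2 ^ d))].

(* a (word of length d+e) occurs in lambda_d starting at (1-based) position
   e - z + 1 of block n, i.e. at 0-based global index n*e + (e - z). *)
Definition occurs_at (d : nat) (a : seq 'F_2) (n z : nat) : bool :=
  take (d + 2 ^ d) (drop (n * 2 ^ d + (2 ^ d - z)) (lambda d)) == a.

(* Main.v *)
Require Import Defs.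
From mathcomp Require Import all_boot all_order all_algebra zify.
Import GRing.Theory.

Module Part0.

Lemma Mentry_low d i j : j < i -> i < 2 ^ d -> Mentry d i j = false.
Proof.
elim: d i j => [|d IH] i j /=; first by rewrite expn0; case: i.
move=> ji; rewrite expnS mul2n -addnn => iB.
case: ifP => ih; case: ifP => jh //.
- by apply: IH.
- by move: (leq_ltn_trans (ltnW ji) ih); rewrite jh.
- apply: IH; lia.
Qed.

Lemma Mentry_diag d i : i < 2 ^ d -> Mentry d i i.
Proof.
elim: d i => [|d IH] i /=; first by rewrite expn0; case: i.
rewrite expnS mul2n -addnn => iB.
case: ifP => ih; rewrite ih; first exact: IH.
apply: IH; lia.
Qed.

Lemma Mentry_lastcol d i : i < 2 ^ d -> Mentry d i (2 ^ d).-1.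
Proof.
elim: d i => [|d IH] i /=; first by rewrite expn0; case: i.
have hp : 0 < 2 ^ d by rewrite expn_gt0.
rewrite expnS mul2n -addnn => iB.
have -> : (2 ^ d + 2 ^ d).-1 < 2 ^ d = false by lia.
have -> : (2 ^ d + 2 ^ d).-1 - 2 ^ d = (2 ^ d).-1 by lia.
case: ifP => ih; first exact: IH.
apply: IH; lia.
Qed.

Lemma Mentry_lastrow d j : j < 2 ^ d -> Mentry d (2 ^ d).-1 j = (j == (2 ^ d).-1).
Proof.
elim: d j => [|d IH] j /=; first by rewrite expn0; case: j.
have hp : 0 < 2 ^ d by rewrite expn_gt0.
rewrite expnS mul2n -addnn => jB.
have -> : (2 ^ d + 2 ^ d).-1 < 2 ^ d = false by lia.
have -> : (2 ^ d + 2 ^ d).-1 - 2 ^ d = (2 ^ d).-1 by lia.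
case: ifP => jh.
  by apply/esym/eqP; lia.
rewrite IH; last by lia.
apply/eqP/eqP; lia.
Qed.

Lemma bin_inj e n m : (n < 2 ^ e)%N -> (m < 2 ^ e)%N ->
  (forall k, (k < e)%N -> odd (n %/ 2 ^ k) = odd (m %/ 2 ^ k)) -> n = m.
Proof.
elim: e n m => [|e IH] n m; first by rewrite expn0; case: n; case: m.
move=> hn hm hk.
rewrite -(odd_double_half n) -(odd_double_half m).
have h0 := hk 0%N isT; rewrite !expn0 !divn1 in h0.
rewrite h0; congr (_ + _)%N; congr (_.*2).
apply: IH.
- by rewrite -divn2 ltn_divLR // -expnSr.
- by rewrite -divn2 ltn_divLR // -expnSr.
move=> k hke; have := hk k.+1 hke.
by rewrite expnS !divnMA !divn2.
Qed.

Local Open Scope ring_scope.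

Lemma F2_11 : (1 + 1 : 'F_2) = 0. Proof. by apply: val_inj. Qed.
Lemma F2_add11 (x : 'F_2) : x + 1 + 1 = x.
Proof. by rewrite -addrA F2_11 addr0. Qed.
Lemma F2_boolK (b c : bool) : ((b:nat)%:R : 'F_2) = (c:nat)%:R -> b = c.
Proof. by case: b; case: c. Qed.

Section M.
Variable d : nat.
Local Notation e := (2 ^ d)%N.

Definition g n : 'cV['F_2]_e := Mmat d *m wvec e n.

Lemma Mmat_unit : Mmat d \in unitmx.
Proof.
rewrite unitmxE -det_tr det_trig.
  rewrite big1 ?unitr1 // => i _; rewrite !mxE Mentry_diag //.
apply/forallP => i; apply/forallP => j; apply/implyP => ij.
by rewrite !mxE Mentry_low.
Qed.

Lemma wvec_inj n m : (n < 2 ^ e)%N -> (m < 2 ^ e)%N -> wvec e n = wvec e m -> n = m.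
Proof.
move=> hn hm hw; apply: (@bin_inj e n m hn hm) => k hk.
have hj : (e - k.+1 < e)%N by lia.
have := congr1 (fun M : 'cV['F_2]_e => M (Ordinal hj) ord0) hw; rewrite !mxE /=.
have -> : (e - (e - k.+1).+1 = k)%N by lia.
exact: F2_boolK.
Qed.

Lemma g_inj n m : (n < 2 ^ e)%N -> (m < 2 ^ e)%N -> g n = g m -> n = m.
Proof.
move=> hn hm hg; apply: wvec_inj => //.
by rewrite -(mulKmx Mmat_unit (wvec e n)) -(mulKmx Mmat_unit (wvec e m)); congr (_ *m _).
Qed.

Lemma e_gt0 : (0 < e)%N. Proof. by rewrite expn_gt0. Qed.
Lemma lastI_lt : (e.-1 < e)%N. Proof. by rewrite ltn_predL e_gt0. Qed.
Definition lastI : 'I_e := Ordinal lastI_lt.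
Lemma lastI_val : (lastI : nat) = e.-1. Proof. by []. Qed.

Lemma g_last n : g n lastI ord0 = (odd n)%:R.
Proof.
rewrite /g mxE (bigD1 lastI) //= big1 ?addr0.
  rewrite !mxE Mentry_lastrow ?eqxx ?mul1r; last by rewrite prednK // e_gt0.
  by rewrite lastI_val prednK ?subnn ?expn0 ?divn1 // e_gt0.
move=> j hj; rewrite !mxE Mentry_lastrow //.
by rewrite (_ : (j == e.-1 :> nat) = false) ?mul0r //; apply/negbTE; rewrite -lastI_val.
Qed.

Lemma wvec_succ n (j : 'I_e) : ~~ odd n ->
  wvec e n.+1 j ord0 = wvec e n j ord0 + (j == lastI)%:R.
Proof.
move=> hn; rewrite !mxE.
case: (eqVneq j lastI) => [->|hj] /=.
  have -> : (e - e.-1.+1 = 0)%N by rewrite prednK ?subnn // e_gt0.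
  by rewrite !expn0 !divn1 /= (negbTE hn) add0r.
rewrite addr0; congr (_%:R); congr odd.
have hk : (0 < e - j.+1)%N.
  have : (j : nat) != e.-1 by [].
  by have := ltn_ord j; lia.
rewrite -(prednK hk) expnS !divnMA; congr (_ %/ _)%N; lia.
Qed.

Lemma g_succ n (i : 'I_e) : ~~ odd n -> g n.+1 i ord0 = g n i ord0 + 1.
Proof.
move=> hn; rewrite /g !mxE.
rewrite (eq_bigr (fun j => Mmat d i j * wvec e n j ord0 + Mmat d i j * (j == lastI)%:R)); last first.
  by move=> j _; rewrite wvec_succ // mulrDr.
rewrite big_split /=; congr (_ + _).
rewrite (bigD1 lastI) //= big1 ?addr0.
  by rewrite eqxx mulr1 mxE Mentry_lastcol.
by move=> j /negbTE ->; rewrite mulr0.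
Qed.

Lemma g_surj (v : 'cV['F_2]_e) : exists2 n, (n < 2 ^ e)%N & g n = v.
Proof.
pose G := fun n : 'I_(2 ^ e) => g n.
have Ginj : injective G.
  by move=> x y /g_inj h; apply: val_inj; apply: h.
have := @inj_card_onto _ _ G Ginj.
rewrite card_mx card_Fp // card_ord muln1 leqnn => /(_ isT v) /codomP [x ->].
by exists x.
Qed.

Lemma nth_block n (i : 'I_e) : nth 0 (block d n) i = g n i ord0.
Proof.
rewrite /block (nth_map i) ?size_enum_ord //; congr (g n _ _).
by apply: val_inj; rewrite /= nth_enum_ord.
Qed.

Lemma size_block n : size (block d n) = e.
Proof. by rewrite size_map size_enum_ord. Qed.

Lemma block_succ n : ~~ odd n -> block d n.+1 = map (fun x => x + 1) (block d n).
Proof.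
move=> hn; rewrite /block /= -map_comp; apply: eq_map => i /=.
by rewrite -g_succ.
Qed.

Lemma block_last n : nth 0 (block d n) e.-1 = (odd n)%:R.
Proof. by rewrite -lastI_val nth_block g_last. Qed.

Lemma block_inj n m : (n < 2 ^ e)%N -> (m < 2 ^ e)%N -> block d n = block d m -> n = m.
Proof.
move=> hn hm hb; apply: g_inj => //; apply/matrixP => i j.
by rewrite (ord1 j) -!nth_block hb.
Qed.

Lemma block_surj B : size B = e -> exists2 n, (n < 2 ^ e)%N & block d n = B.
Proof.
move=> hB; have [n hn hg] := g_surj (\col_i nth 0 B i).
exists n => //; apply: (@eq_from_nth _ 0); rewrite size_block ?hB // => i hi.
by rewrite (nth_block n (Ordinal hi)) hg mxE.
Qed.
End M.

End Part0.
Import Part0.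

Module Part1.
Local Open Scope ring_scope.

Definition flip (s : seq 'F_2) := map (fun x => x + 1) s.

Lemma flipK s : flip (flip s) = s.
Proof. by rewrite /flip -map_comp map_id_in // => x _ /=; rewrite F2_add11. Qed.

Lemma flip_take k s : flip (take k s) = take k (flip s).
Proof. exact: map_take. Qed.
Lemma flip_cat s t : flip (s ++ t) = flip s ++ flip t.
Proof. exact: map_cat. Qed.

Lemma comb (d e z : nat) (a B : seq 'F_2) : size a = (d + e)%N -> size B = e ->
  (d <= z <= e)%N ->
  (forall i, (i < d)%N -> nth 0 a (e + i) = nth 0 a i + 1) ->
  (a == drop (e - z) B ++ take (d + e - z) (flip B)) =
  (B == flip (take (e - z) (drop z a)) ++ take z a).
Proof.
move=> ha hB /andP [hdz hze] hc; apply/eqP/eqP => [->|->].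
  rewrite takel_cat ?size_drop ?hB; last lia.
  rewrite (take_oversize (s := drop (e-z) B)); last by rewrite size_drop hB; lia.
  rewrite drop_size_cat; last by rewrite size_drop hB; lia.
  rewrite take_takel; last lia.
  by rewrite -flip_take flipK cat_take_drop.
have hP : size (flip (take (e - z) (drop z a))) = (e - z)%N.
  by rewrite size_map size_takel // size_drop ha; lia.
rewrite drop_size_cat // flip_cat flipK take_cat.
rewrite size_takel ?size_drop ?ha; last lia.
rewrite ifF; last lia.
have -> : (d + e - z - (e - z) = d)%N by lia.
rewrite catA -takeD (_ : (z + (e - z) = e)%N); last lia.
rewrite -flip_take take_takel //.
have hd : drop e a = flip (take d a).
  apply: (@eq_from_nth _ 0); first by rewrite size_drop size_map size_takel ha; lia.
  move=> i; rewrite size_drop ha => hi.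
  rewrite nth_drop (nth_map 0) ?size_takel ?ha; try lia.
  rewrite nth_take; last lia.
  by apply: hc; lia.
by rewrite -hd cat_take_drop.
Qed.

End Part1.
Import Part1.

Module Part2.

Lemma size_flat d n : size (flatten [seq block d m | m <- iota 0 n]) = (n * 2 ^ d)%N.
Proof.
elim: n => [|n IH] //.
by rewrite -[n.+1]addn1 iotaD map_cat flatten_cat size_cat IH /= cats0 size_block mulnDl mul1n.
Qed.

Lemma window d a n z : (n.+1 < 2 ^ (2 ^ d))%N -> (d <= z <= 2 ^ d)%N -> (1 <= d)%N ->
  occurs_at d a n z =
  (a == drop (2 ^ d - z) (block d n) ++ take (d + 2 ^ d - z) (block d n.+1)).
Proof.
move=> hn /andP [hdz hze] hd.
rewrite /occurs_at /lambda.
have hE : (2 ^ (2 ^ d) = n + (2 ^ (2 ^ d) - n.+2).+2)%N by lia.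
rewrite {1}hE iotaD add0n.
rewrite map_cat flatten_cat /=.
rewrite [(n * _ + _)%N]addnC -drop_drop drop_size_cat; last by rewrite size_flat.
clear hE hn.
rewrite drop_cat size_block ifT; last by have := e_gt0 d; lia.
rewrite take_cat size_drop size_block ifF; last lia.
have -> : (d + 2 ^ d - (2 ^ d - (2 ^ d - z)) = d + 2 ^ d - z)%N by lia.
rewrite takel_cat; last by rewrite size_block; lia.
by rewrite eq_sym.
Qed.

End Part2.
Import Part2.

Module Part3.

Lemma oddE d : odd (2 ^ (2 ^ d)) = false.
Proof. by rewrite oddX expn_eq0. Qed.

Lemma per_z d (a : seq 'F_2) z : (1 <= d)%N -> size a = (d + 2 ^ d)%N ->
  (forall i : nat, (i < d)%N -> nth 0%R a (2 ^ d + i) = (nth 0%R a i + 1)%R) ->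
  (d <= z <= 2 ^ d)%N ->
  (\sum_(0 <= n < (2 ^ (2 ^ d)).-1 | ~~ odd n) (occurs_at d a n z : nat))%N
  = (if nth 0%R a z.-1 == 0%R then 1 else 0)%N.
Proof.
move=> hd ha hc hz.
set Bz := (flip (take (2 ^ d - z) (drop z a)) ++ take z a).
have hBz : size Bz = (2 ^ d)%N.
  rewrite size_cat size_map !size_takel ?size_drop ?ha; lia.
have [n0 hn0 hb0] := @block_surj d Bz hBz.
have hoE := oddE d.
rewrite big_mkcond /=.
rewrite (eq_big_nat _ _ (F2 := fun n => if ~~ odd n && (n == n0) then 1%N else 0%N)); last first.
  move=> n /andP [_ hn]; case: ifP => hodd /=; last by [].
  rewrite window //; last by move: hn; move: (2 ^ 2 ^ d)%N hoE => E; lia.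
  rewrite block_succ // -/(flip _) comb ?size_block //.
  have -> : (block d n == Bz) = (n == n0).
    apply/eqP/eqP => [hbn|->] //; apply: block_inj hn0 _; first by move: hn; move: (2 ^ 2 ^ d)%N hoE => E; lia.
    by rewrite hbn.
  by case: (n == n0).
rewrite -(big_mkcond (fun i => ~~ odd i && (i == n0)) (fun _ => 1%N)) sum1_count /=.
have hlast : nth 0%R Bz (2 ^ d).-1 = nth 0%R a z.-1.
  rewrite nth_cat size_map size_takel ?size_drop ?ha; last lia.
  rewrite ifF; last lia.
  rewrite nth_take; last lia.
  congr nth; lia.
rewrite -hlast -hb0 block_last.
case hodd0 : (odd n0) => /=.
  by rewrite (eq_count (a2 := pred0)) ?count_pred0 // => n /=; apply/negbTE; apply/andP => -[hn /eqP hn']; move: hn; rewrite hn' hodd0.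
rewrite (eq_count (a2 := pred1 n0)); last by move=> n /=; case: eqP => [->|]; rewrite ?hodd0 ?andbF.
rewrite count_uniq_mem ?iota_uniq // mem_index_iota.
move: hn0; move: (2 ^ 2 ^ d)%N hoE => E hE hn. have -> : (0 <= n0 < E.-1) = true by apply/idP; lia. by []. Qed.

End Part3.
Import Part3.


Theorem mainTheorem7 (d : nat) (a : seq 'F_2)
  (hd : (1 <= d)%N)
  (ha : size a = (d + 2 ^ d)%N)
  (hcompl : forall i : nat, (i < d)%N ->
     nth 0%R a (2 ^ d + i) = (nth 0%R a i + 1)%R) :
  (\sum_(0 <= n < (2 ^ (2 ^ d)).-1 | ~~ odd n)
     \sum_(d <= z < (2 ^ d).+1) (occurs_at d a n z : nat))%N
  = count (fun z => nth 0%R a z.-1 == 0%R) (iota d ((2 ^ d).+1 - d)).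
Proof.
rewrite exchange_big_nat -sum1_count big_mkcond /=.
rewrite [RHS]big_mkcond; apply: eq_big_seq => z; rewrite mem_index_iota ltnS => hz.
exact: per_z.
Qed.
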